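(* Let $\mathcal{Q}$ be a quadrangle with vertices $A,C,B,D$ in cyclic order. For each point $X$ on the line $A\vee B$ put $Y=X\cdot\rho_{A,B}$ and $Z(X)=(C\vee X)\wedge(D\vee Y)$. Then $C\vee X\neq D\vee Y$ for every $X\in A\vee B$, and the map $X\mapsto Z(X)$ is a bijection from the line $A\vee B$ onto the harmonic curve $\mathcal{C}_{\mathcal{Q}}$.
   Context: $\mathbb{P}^2$ denotes the projective plane over a field $F$ with $\operatorname{char}F\neq 2$. For distinct points $X,Y$, $X\vee Y$ is the line through them; for distinct lines $\ell,m$, $\ell\wedge m$ is their common point. Maps act on the right: $X\cdot\rho$. Four distinct collinear points $A,C,B,D$ form a harmonic set with conjugate pairs $\{A,B\}$ and $\{C,D\}$ if the cross-ratio $(A,B;C,D)=-1$; $D$ is then the harmonic conjugate of $C$ with respect to $A,B$. Four distinct concurrent lines form a harmonic pencil with given conjugate pairs if some (equivalently every) line not through their common point meets them in a harmonic set with the corresponding conjugate pairs. For distinct points $A,B$ on a line $\ell$, the harmonic reflection $\rho_{A,B}:\ell\to\ell$ fixes $A$ and $B$ and sends every other point of $\ell$ to its harmonic conjugate with respect to $A,B$. A quadrangle $\mathcal{Q}$ with vertices $A,C,B,D$ (in cyclic order) consists of four points in general position (no three collinear) together with this cyclic order up to reversal; its sides are $A\vee C, C\vee B, B\vee D, D\vee A$, its opposite vertex pairs are $\{A,B\}$ and $\{C,D\}$, and its diagonal lines are $A\vee B$ and $C\vee D$. The harmonic curve $\mathcal{C}_{\mathcal{Q}}$ is the set consisting of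 $A,C,B,D$ together with all points $Z\notin\{A,B,C,D\}$ such that $Z\vee A, Z\vee C, Z\vee B, Z\vee D$ are four distinct lines forming a harmonic pencil with conjugate pairs $\{Z\vee A,Z\vee B\}$ and $\{Z\vee C,Z\vee D\}$. *)

(* Defs.v *)
(* Points (and, dually, lines) are represented by the unique normalized
   homogeneous coordinate vector: the first nonzero coordinate equals 1.
   Hence equality of points/lines is Leibniz equality. *)
From HB Require Import structures.
From mathcomp Require Import all_boot all_order all_algebra.
From Stdlib Require Import ClassicalEpsilon.
Set Implicit Arguments. Unset Strict Implicit. Unset Printing Implicit Defensive.
Import Order.TTheory GRing.Theory Num.Theory.
Local Open Scope ring_scope.

Section Proj.
Variable F : fieldType.

Definition vec3 := (F * F * F)%type.

Definition normalized (v : vec3) : bool :=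
  let: (a, b, c) := v in
  if a != 0 then a == 1 else if b != 0 then b == 1 else c == 1.

Definition point := {v : vec3 | normalized v}.
Definition line := {v : vec3 | normalized v}.

Lemma normalized_e3 : normalized (0, 0, 1).
Proof. by rewrite /normalized !eqxx. Qed.

Definition e3 : point := exist _ (0, 0, 1) normalized_e3.
Definition l3 : line := exist _ (0, 0, 1) normalized_e3.

Definition vadd (u v : vec3) : vec3 :=
  (u.1.1 + v.1.1, u.1.2 + v.1.2, u.2 + v.2).
Definition vscale (s : F) (u : vec3) : vec3 := (s * u.1.1, s * u.1.2, s * u.2).
Definition vdot (u v : vec3) : F := u.1.1 * v.1.1 + u.1.2 * v.1.2 + u.2 * v.2.

Definition incident (P : point) (l : line) : bool := vdot (val P) (val l) == 0.

(* X \/ Y : the line through X and Y (unique when X <> Y) *)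
Definition join (X Y : point) : line :=
  epsilon (inhabits l3) (fun l => incident X l /\ incident Y l).

(* l /\ m : the common point of l and m (unique when l <> m) *)
Definition meet (l m : line) : point :=
  epsilon (inhabits e3) (fun P => incident P l /\ incident P m).

Definition collinear3 (P Q R : point) : Prop :=
  exists l, [/\ incident P l, incident Q l & incident R l].

Definition distinct4 {T : eqType} (a b c d : T) : bool :=
  [&& a != b, a != c, a != d, b != c, b != d & c != d].

(* (A,B;C,D) = k : with homogeneous representatives a,b of A,B one has
   C = a + l b, D = a + m b (up to nonzero scalars) and k = l / m. *)
Definition cross_ratio_is (A B C D : point) (k : F) : Prop :=
  exists l m s t : F,
    [&& s != 0, t != 0 & m != 0] /\
    [/\ val C = vscale s (vadd (val A) (vscale l (val B))),
        val D = vscale t (vadd (val A) (vscale m (val B)))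
      & k = l / m].

(* A, C, B, D form a harmonic set with conjugate pairs {A,B}, {C,D} *)
Definition harmonic (A B C D : point) : Prop :=
  [/\ distinct4 A B C D,
      exists l, [/\ incident A l, incident B l, incident C l & incident D l]
    & cross_ratio_is A B C D (-1)].

Definition harmonic_pencil (Z : point) (l1 l2 l3 l4 : line) : Prop :=
  [/\ distinct4 l1 l2 l3 l4,
      [&& incident Z l1, incident Z l2, incident Z l3 & incident Z l4]
    & exists m, ~~ incident Z m /\
        harmonic (meet m l1) (meet m l2) (meet m l3) (meet m l4)].

Definition hrefl (A B X : point) : point :=
  if (X == A) || (X == B) then X
  else epsilon (inhabits e3) (fun Y => harmonic A B X Y).

Definition quadrangle (A C B D : point) : Prop :=
  [/\ distinct4 A C B D,
      ~ collinear3 A C B, ~ collinear3 A C D,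
      ~ collinear3 A B D & ~ collinear3 C B D].

Definition harmonic_curve (A C B D : point) (Z : point) : Prop :=
  Z \in [:: A; C; B; D] \/
   [/\ Z \notin [:: A; C; B; D],
       distinct4 (join Z A) (join Z B) (join Z C) (join Z D)
     & harmonic_pencil Z (join Z A) (join Z B) (join Z C) (join Z D)].

End Proj.

(* Main.v *)
Require Import Defs.
From HB Require Import structures.
From mathcomp Require Import all_boot all_order all_algebra.
From mathcomp Require Import ring.
From Stdlib Require Import ClassicalEpsilon.
Set Implicit Arguments. Unset Strict Implicit. Unset Printing Implicit Defensive.
Import Order.TTheory GRing.Theory Num.Theory.
Local Open Scope ring_scope.
Section S.
Variable F : fieldType.
Implicit Types (u v w : vec3 F) (P Q R A B C D X Y Z : point F).

Definition vz : vec3 F := (0,0,0).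

Lemma v3E (a b c a' b' c' : F) : a = a' -> b = b' -> c = c' -> (a,b,c) = (a',b',c').
Proof. by move=> -> -> ->. Qed.

Definition lead (v : vec3 F) : F :=
  let: (a,b,c) := v in if a != 0 then a else if b != 0 then b else c.

Lemma lead_eq0 v : (lead v == 0) = (v == vz).
Proof.
case: v => [[a b] c] /=; rewrite /vz !xpair_eqE.
case: (eqVneq a 0) => [->|ha]; case: (eqVneq b 0) => [->|hb];
  rewrite ?eqxx /= ?(negbTE ha) ?(negbTE hb) ?andbF //.
Qed.

Lemma normalized_lead v : normalized v = (lead v == 1).
Proof. by case: v => [[a b] c]; rewrite /normalized /lead; case: (a != 0); case: (b != 0). Qed.

Definition vnorm v := vscale (lead v)^-1 v.

Lemma lead_scale s v : s != 0 -> lead (vscale s v) = s * lead v.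
Proof.
move=> hs; case: v => [[a b] c]; rewrite /vscale /lead /= !mulf_eq0 (negbTE hs) /=.
by case: (a != 0); case: (b != 0).
Qed.

Lemma vscale1 v : vscale 1 v = v.
Proof. by case: v => [[a b] c]; rewrite /vscale /= !mul1r. Qed.

Lemma normalized_vnorm v : v != vz -> normalized (vnorm v).
Proof.
move=> hv; rewrite normalized_lead /vnorm lead_scale ?mulVf ?invr_eq0 ?lead_eq0 //.
Qed.

Lemma vnorm_id v : normalized v -> vnorm v = v.
Proof. by rewrite normalized_lead /vnorm => /eqP ->; rewrite invr1 vscale1. Qed.

Lemma vnorm_scale s v : s != 0 -> vnorm (vscale s v) = vnorm v.
Proof.
move=> hs; rewrite /vnorm lead_scale // invfM.
case: v => [[a b] c]; rewrite /vscale /=.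
by apply: v3E; rewrite -mulrA mulrCA mulKf.
Qed.

Definition nv v : vec3 F := if normalized (vnorm v) then vnorm v else (0,0,1).
Lemma nv_ok v : normalized (nv v).
Proof. rewrite /nv; case: ifP => // _; exact: normalized_e3. Qed.
Definition npt v : point F := exist _ (nv v) (nv_ok v).

Lemma pt_eq P Q : val P = val Q -> P = Q.
Proof. move: P Q => [p hp] [q hq] /= e; subst q; by rewrite (bool_irrelevance hp hq). Qed.

Lemma val_npt v : v != vz -> val (npt v) = vscale (lead v)^-1 v.
Proof. by move=> hv; rewrite /= /nv normalized_vnorm. Qed.

Lemma leadinv_nz v : v != vz -> (lead v)^-1 != 0.
Proof. by move=> hv; rewrite invr_eq0 lead_eq0. Qed.

Lemma npt_val P : npt (val P) = P.
Proof. by apply: pt_eq; rewrite /= /nv vnorm_id ?(proj2_sig P) // (proj2_sig P). Qed.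

Lemma val_nz P : val P != vz.
Proof.
apply/negP => /eqP e; have := proj2_sig P; rewrite /= e /normalized /= eqxx /=.
by rewrite eq_sym oner_eq0.
Qed.

Lemma npt_scale s v : s != 0 -> npt (vscale s v) = npt v.
Proof. by move=> hs; apply: pt_eq; rewrite /= /nv vnorm_scale. Qed.

Lemma vscale_eq0 s v : (vscale s v == vz) = (s == 0) || (v == vz).
Proof.
case: v => [[a b] c]; rewrite /vscale /vz /= !xpair_eqE !mulf_eq0.
by case: (s == 0).
Qed.

Lemma eq_scaled P Q s : val P = vscale s (val Q) -> P = Q.
Proof.
move=> e; have hs : s != 0.
  apply/negP => /eqP s0; have := val_nz P; by rewrite e s0 vscale_eq0 eqxx.
by rewrite -(npt_val P) e npt_scale // npt_val.
Qed.


Definition cross u v : vec3 F :=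
  (u.1.2 * v.2 - u.2 * v.1.2, u.2 * v.1.1 - u.1.1 * v.2, u.1.1 * v.1.2 - u.1.2 * v.1.1).

Lemma vdotC u v : vdot u v = vdot v u.
Proof. case: u => [[a b] c]; case: v => [[x y] z]; rewrite /vdot /=; ring. Qed.

Lemma parallel u w : u != vz -> cross u w = vz -> exists k, w = vscale k u.
Proof.
case: u => [[a b] c]; case: w => [[x y] z]; rewrite /vz /cross /vscale /= => nz [].
move=> /eqP; rewrite subr_eq0 => /eqP e1.
move=> /eqP; rewrite subr_eq0 => /eqP e2.
move=> /eqP; rewrite subr_eq0 => /eqP e3.
have mk (c0 z0 u0 : F) : c0 != 0 -> c0 * (z0 / c0 * u0) = z0 * u0.
  by move=> h; field.
have [ha|ha] := eqVneq a 0; last first.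
  exists (x / a); apply: v3E; apply: (mulfI ha); rewrite mk //.
  - by rewrite mulrC.
  - by rewrite e3 mulrC.
  - by rewrite -e2 mulrC.
have [hb|hb] := eqVneq b 0; last first.
  exists (y / b); apply: v3E; apply: (mulfI hb); rewrite mk //.
  - by rewrite -e3 mulrC.
  - by rewrite mulrC.
  - by rewrite e1 mulrC.
have hc : c != 0 by apply: contraNneq nz => hc; rewrite ha hb hc.
exists (z / c); apply: v3E; apply: (mulfI hc); rewrite mk //.
- by rewrite e2 mulrC.
- by rewrite -e1 mulrC.
- by rewrite mulrC.
Qed.

Lemma cross_nz P Q : P != Q -> cross (val P) (val Q) != vz.
Proof.
move=> hPQ; apply/negP => /eqP e; have [k hk] := parallel (val_nz P) e.
by move: hPQ; rewrite (eq_scaled hk) eqxx.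
Qed.

Lemma triple p q l :
  cross (cross p q) l = vadd (vscale (vdot p l) q) (vscale (- vdot q l) p).
Proof.
case: p => [[a b] c]; case: q => [[x y] z]; case: l => [[r s] t].
rewrite /cross /vdot /vadd /vscale /=; apply: v3E; ring.
Qed.

Lemma orth_uniq P Q (l m : point F) : P != Q ->
  vdot (val P) (val l) = 0 -> vdot (val Q) (val l) = 0 ->
  vdot (val P) (val m) = 0 -> vdot (val Q) (val m) = 0 -> l = m.
Proof.
move=> hPQ h1 h2 h3 h4.
have key (n : point F) : vdot (val P) (val n) = 0 -> vdot (val Q) (val n) = 0 ->
    n = npt (cross (val P) (val Q)).
  move=> e1 e2.
  have : cross (cross (val P) (val Q)) (val n) = vz.
    rewrite triple e1 e2 oppr0; case: (val Q) => [[a b] c]; case: (val P) => [[x y] z].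
    by rewrite /vadd /vscale /vz /= !mul0r !addr0.
  move=> /(parallel (cross_nz hPQ)) [k hk].
  have hk0 : k != 0 by apply: contraNneq (val_nz n) => k0; rewrite hk k0 vscale_eq0 eqxx.
  by rewrite -(npt_val n) hk npt_scale.
by rewrite (key l) // (key m).
Qed.

Lemma vdot_scale s u v : vdot (vscale s u) v = s * vdot u v.
Proof. case: u => [[a b] c]; case: v => [[x y] z]; rewrite /vdot /vscale /=; ring. Qed.

Lemma orth_ex P Q : P != Q -> exists l : point F,
  vdot (val P) (val l) = 0 /\ vdot (val Q) (val l) = 0.
Proof.
move=> hPQ; exists (npt (cross (val P) (val Q))).
rewrite val_npt ?cross_nz // !(vdotC (val _)) !vdot_scale.
case: (val P) => [[a b] c]; case: (val Q) => [[x y] z].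
by rewrite /vdot /cross /=; split; apply/eqP; rewrite mulf_eq0; apply/orP; right; apply/eqP; ring.
Qed.

Lemma join_spec P Q : P != Q -> incident P (join P Q) /\ incident Q (join P Q).
Proof.
move=> hPQ; rewrite /join; apply: (epsilon_spec _ (fun l => incident P l /\ incident Q l)).
have [l [h1 h2]] := orth_ex hPQ; exists l; by rewrite /incident h1 h2 eqxx.
Qed.

Lemma join_uniq P Q (l : line F) : P != Q -> incident P l -> incident Q l -> l = join P Q.
Proof.
move=> hPQ /eqP h1 /eqP h2; have [/eqP h3 /eqP h4] := join_spec hPQ.
exact: (orth_uniq hPQ).
Qed.

Lemma meet_spec (l m : line F) : l != m -> incident (meet l m) l /\ incident (meet l m) m.
Proof.
move=> hlm; rewrite /meet; apply: (epsilon_spec _ (fun P => incident P l /\ incident P m)).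
have [P [h1 h2]] := orth_ex hlm; exists P; by rewrite /incident vdotC h1 vdotC h2 eqxx.
Qed.

Lemma pts_uniq (l m : line F) P Q : l != m -> incident P l -> incident P m ->
  incident Q l -> incident Q m -> P = Q.
Proof.
move=> hlm /eqP h1 /eqP h2 /eqP h3 /eqP h4.
by apply: (orth_uniq hlm); rewrite vdotC.
Qed.

Lemma meet_uniq (l m : line F) P : l != m -> incident P l -> incident P m -> P = meet l m.
Proof.
move=> hlm h1 h2; have [h3 h4] := meet_spec hlm; exact: (pts_uniq hlm).
Qed.


Definition det u v w := vdot (cross u v) w.
Definition lc (s t : F) u v := vadd (vscale s u) (vscale t v).

Lemma lcE s l a b : vscale s (vadd a (vscale l b)) = lc s (s * l) a b.
Proof. case: a => [[? ?] ?]; case: b => [[? ?] ?]; rewrite /lc /vscale /vadd /=; apply: v3E; ring. Qed.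
Lemma lc_a a b : a = lc 1 0 a b.
Proof. case: a => [[? ?] ?]; case: b => [[? ?] ?]; rewrite /lc /vscale /vadd /=; apply: v3E; ring. Qed.
Lemma lc_b a b : b = lc 0 1 a b.
Proof. case: a => [[? ?] ?]; case: b => [[? ?] ?]; rewrite /lc /vscale /vadd /=; apply: v3E; ring. Qed.
Lemma lc_scale s x y a b : vscale s (lc x y a b) = lc (s * x) (s * y) a b.
Proof. case: a => [[? ?] ?]; case: b => [[? ?] ?]; rewrite /lc /vscale /vadd /=; apply: v3E; ring. Qed.
Lemma vdot_lc x y a b n : vdot (lc x y a b) n = x * vdot a n + y * vdot b n.
Proof. case: a => [[? ?] ?]; case: b => [[? ?] ?]; case: n => [[? ?] ?]; rewrite /lc /vdot /vscale /vadd /=; ring. Qed.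

Lemma indep A B x y : A != B -> lc x y (val A) (val B) = vz -> x = 0 /\ y = 0.
Proof.
move=> hAB e.
have e1 : cross (lc x y (val A) (val B)) (val B) = vscale x (cross (val A) (val B)).
  case: (val A) => [[? ?] ?]; case: (val B) => [[? ?] ?]; rewrite /lc /cross /vscale /vadd /=; apply: v3E; ring.
have e2 : cross (val A) (lc x y (val A) (val B)) = vscale y (cross (val A) (val B)).
  case: (val A) => [[? ?] ?]; case: (val B) => [[? ?] ?]; rewrite /lc /cross /vscale /vadd /=; apply: v3E; ring.
have cz : forall w, cross w vz = vz /\ cross vz w = vz.
  by move=> [[? ?] ?]; rewrite /cross /vz /=; split; apply: v3E; ring.
rewrite e (proj1 (cz _)) in e2; rewrite e (proj2 (cz _)) in e1.
move: e1 e2 => /eqP; rewrite eq_sym vscale_eq0 (negbTE (cross_nz hAB)) orbF => /eqP ->.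
by move=> /eqP; rewrite eq_sym vscale_eq0 (negbTE (cross_nz hAB)) orbF => /eqP ->.
Qed.

Lemma indep2 A B x1 y1 x2 y2 : A != B ->
  lc x1 y1 (val A) (val B) = lc x2 y2 (val A) (val B) -> x1 = x2 /\ y1 = y2.
Proof.
move=> hAB e.
have : lc (x1 - x2) (y1 - y2) (val A) (val B) = vz.
  move: e; case: (val A) => [[? ?] ?]; case: (val B) => [[? ?] ?]; rewrite /lc /vz /vscale /vadd /=.
  case=> h1 h2 h3; apply: v3E.
  - by rewrite !mulrBl addrACA h1 addrACA; ring.
  - by rewrite !mulrBl addrACA h2 addrACA; ring.
  - by rewrite !mulrBl addrACA h3 addrACA; ring.
by move=> /(indep hAB) [/eqP]; rewrite subr_eq0 => /eqP -> /eqP; rewrite subr_eq0 => /eqP ->.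
Qed.

Lemma cramer a b e x : vscale (det a b e) x =
  vadd (vadd (vscale (det x b e) a) (vscale (det a x e) b)) (vscale (det a b x) e).
Proof.
case: a => [[? ?] ?]; case: b => [[? ?] ?]; case: e => [[? ?] ?]; case: x => [[? ?] ?].
rewrite /det /vdot /cross /vscale /vadd /=; apply: v3E; ring.
Qed.

Lemma solve2 a b e x : det a b e != 0 -> det a b x = 0 ->
  x = lc (det x b e / det a b e) (det a x e / det a b e) a b.
Proof.
move=> hd hx; move: (cramer a b e x) hd; rewrite hx; clear hx.
move: (det a b e) (det x b e) (det a x e) => d al be.
case: a => [[? ?] ?]; case: b => [[? ?] ?]; case: e => [[? ?] ?]; case: x => [[? ?] ?].
rewrite /lc /vscale /vadd /=; case=> h1 h2 h3 hd; apply: v3E; apply: (mulfI hd).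
- by rewrite h1; field.
- by rewrite h2; field.
- by rewrite h3; field.
Qed.

Lemma npt_cross_inc P Q : P != Q ->
  incident P (npt (cross (val P) (val Q))) /\ incident Q (npt (cross (val P) (val Q))).
Proof.
move=> hPQ; rewrite /incident val_npt ?cross_nz // !(vdotC (val _)) !vdot_scale.
case: (val P) => [[a b] c]; case: (val Q) => [[x y] z].
by rewrite /vdot /cross /=; split; rewrite mulf_eq0; apply/orP; right; apply/eqP; ring.
Qed.

Lemma join_val P Q : P != Q -> join P Q = npt (cross (val P) (val Q)).
Proof. by move=> hPQ; have [h1 h2] := npt_cross_inc hPQ; rewrite -(join_uniq hPQ h1 h2). Qed.

Lemma pick_e w : w != vz -> exists e, vdot w e != 0.
Proof.
case: w => [[a b] c] nz.
have [ha|ha] := eqVneq a 0; last by exists (1,0,0); rewrite /vdot /= mulr1 !mulr0 !addr0.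
have [hb|hb] := eqVneq b 0; last by exists (0,1,0); rewrite /vdot /= mulr1 !mulr0 addr0 add0r.
exists (0,0,1); rewrite /vdot /= mulr1 !mulr0 !add0r.
by apply: contraNneq nz => hc; rewrite ha hb hc.
Qed.

Lemma span A B X : A != B -> incident X (join A B) ->
  exists p q, val X = lc p q (val A) (val B).
Proof.
move=> hAB; rewrite join_val // /incident val_npt ?cross_nz // vdotC vdot_scale mulf_eq0.
rewrite (negbTE (leadinv_nz (cross_nz hAB))) /= => /eqP hx.
have [e he] := pick_e (cross_nz hAB).
by eexists; eexists; apply: (solve2 he).
Qed.


Lemma d4I (T : eqType) (a b c d : T) : a != b -> a != c -> a != d -> b != c -> b != d -> c != d -> distinct4 a b c d.
Proof. by move=> *; apply/and5P; split => //; apply/andP. Qed.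

Lemma vscaleA s t v : vscale s (vscale t v) = vscale (s * t) v.
Proof. case: v => [[? ?] ?]; rewrite /vscale /=; apply: v3E; ring. Qed.

Lemma lc0a y a b : lc 0 y a b = vscale y b.
Proof. case: a => [[? ?] ?]; case: b => [[? ?] ?]; rewrite /lc /vscale /vadd /=; apply: v3E; ring. Qed.
Lemma lc0b x a b : lc x 0 a b = vscale x a.
Proof. case: a => [[? ?] ?]; case: b => [[? ?] ?]; rewrite /lc /vscale /vadd /=; apply: v3E; ring. Qed.

Lemma harm_unpack A B X Y : harmonic A B X Y ->
  [/\ distinct4 A B X Y,
      (incident X (join A B) /\ incident Y (join A B)) &
      cross_ratio_is A B X Y (-1)].
Proof.
case=> /and5P [hAB hAX hAY hBX /andP [hBY hXY]] [l [h1 h2 h3 h4]] hc; split => //; first by apply: d4I.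
by rewrite (join_uniq hAB h1 h2) in h3 h4.
Qed.

Lemma harm_uniq A B X Y1 Y2 : harmonic A B X Y1 -> harmonic A B X Y2 -> Y1 = Y2.
Proof.
move=> /harm_unpack [/and5P [hAB _ _ _ /andP [_ _]] _ [l1 [m1 [s1 [t1 [/and3P [hs1 ht1 hm1] [eX1 eY1 ek1]]]]]]].
move=> /harm_unpack [_ _ [l2 [m2 [s2 [t2 [/and3P [hs2 ht2 hm2] [eX2 eY2 ek2]]]]]]].
rewrite lcE eX2 lcE in eX1.
have [es el] := indep2 hAB eX1; subst s2.
have el' : l1 = l2 by apply: (mulfI hs1).
have hl1 : l1 = - m1 by rewrite -(mulfVK hm1 l1) -ek1 mulN1r.
have hl2 : l2 = - m2 by rewrite -(mulfVK hm2 l2) -ek2 mulN1r.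
have em : m1 = m2 by apply: oppr_inj; rewrite -hl1 -hl2.
subst m2; apply: (@eq_scaled _ _ (t1 / t2)).
by rewrite eY1 eY2 vscaleA divfK.
Qed.

Lemma harm_sym A B X Y : harmonic A B X Y -> harmonic A B Y X.
Proof.
case=> /and5P [hAB hAX hAY hBX /andP [hBY hXY]] [l [h1 h2 h3 h4]] [l0 [m0 [s [t [/and3P [hs ht hm] [eX eY ek]]]]]].
have hl : l0 = - m0 by rewrite -(mulfVK hm l0) -ek mulN1r.
split.
- by apply: d4I => //; rewrite eq_sym.
- by exists l.
exists m0, l0, t, s; split; first by rewrite ht hs hl oppr_eq0 hm.
by split => //; rewrite hl invrN mulrN mulfV.
Qed.

Lemma harm_ex A B X : (2%:R : F) != 0 -> A != B -> incident X (join A B) -> X != A -> X != B ->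
  exists Y, harmonic A B X Y.
Proof.
move=> h2 hAB hX hXA hXB.
have [p [q eX]] := span hAB hX.
have hp : p != 0.
  apply: contraNneq hXB => p0; apply/eqP; apply: (@eq_scaled _ _ q); by rewrite eX p0 lc0a.
have hq : q != 0.
  apply: contraNneq hXA => q0; apply/eqP; apply: (@eq_scaled _ _ p); by rewrite eX q0 lc0b.
have hl : q / p != 0 by rewrite mulf_eq0 invr_eq0 negb_or hq hp.
set w := lc 1 (- (q / p)) (val A) (val B).
have hw : w != vz.
  apply/negP => /eqP /(indep hAB) [] /eqP; by rewrite oner_eq0.
have hc := leadinv_nz hw.
move: (lead w)^-1 hc (val_npt hw) => c hc eY.
exists (npt w); split.
- apply: d4I; [done | by rewrite eq_sym | | by rewrite eq_sym | |].
  + apply/negP => /eqP e; move: (congr1 val e); rewrite eY {1}(lc_a (val A) (val B)) /w lc_scale.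
    move=> /(indep2 hAB) [_ /eqP]; by rewrite eq_sym mulf_eq0 (negbTE hc) oppr_eq0 (negbTE hl).
  + apply/negP => /eqP e; move: (congr1 val e); rewrite eY {1}(lc_b (val A) (val B)) /w lc_scale.
    move=> /(indep2 hAB) [/eqP]; by rewrite eq_sym mulr1 (negbTE hc).
  + apply/negP => /eqP e; move: (congr1 val e); rewrite eY eX /w lc_scale.
    move=> /(indep2 hAB) [e1 e2]; rewrite mulr1 in e1; rewrite e1 in e2.
    have e3 : q = - q by rewrite {1}e2 mulrN (mulrC c) divfK.
    move: h2; have -> : (2%:R : F) = 0.
      by apply: (mulIf hq); rewrite mul0r mulr_natl mulr2n {1}e3 addNr.
    by rewrite eqxx.
- have [hA hB] := join_spec hAB.
  exists (join A B); split => //.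
  move: hA hB; rewrite /incident eY vdot_scale /w vdot_lc => /eqP -> /eqP ->.
  by rewrite !mulr0 addr0 mulr0.
- exists (q / p), (- (q / p)), p, c; split; first by rewrite hp hc oppr_eq0 hl.
  split.
  + by rewrite lcE eX; congr lc; field.
  + by rewrite eY /w lcE lc_scale mulr1.
  + by rewrite invrN mulrN mulfV.
Qed.

Lemma hrefl_AB A B X : X = A \/ X = B -> hrefl A B X = X.
Proof. by rewrite /hrefl => -[->|->]; rewrite eqxx ?orbT. Qed.

Lemma hrefl_harm A B X : (2%:R : F) != 0 -> A != B -> incident X (join A B) ->
  X != A -> X != B -> harmonic A B X (hrefl A B X).
Proof.
move=> h2 hAB hX hXA hXB; rewrite /hrefl (negbTE hXA) (negbTE hXB) /=.
apply: (epsilon_spec _ (fun Y => harmonic A B X Y)); exact: harm_ex.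
Qed.

Lemma hrefl_cases A B X : (2%:R : F) != 0 -> A != B -> incident X (join A B) ->
  (X = A \/ X = B) /\ hrefl A B X = X \/
  [/\ X != A, X != B & harmonic A B X (hrefl A B X)].
Proof.
move=> h2 hAB hX; have [->|hXA] := eqVneq X A; first by left; split; [left|apply: hrefl_AB; left].
have [->|hXB] := eqVneq X B; first by left; split; [right|apply: hrefl_AB; right].
by right; split => //; apply: hrefl_harm.
Qed.

Lemma hrefl_on A B X : (2%:R : F) != 0 -> A != B -> incident X (join A B) ->
  incident (hrefl A B X) (join A B).
Proof.
move=> h2 hAB hX; case: (hrefl_cases h2 hAB hX) => [[_ ->] //|[_ _ /harm_unpack [_ [] //]]].
Qed.

Lemma hrefl_fix A B X : (2%:R : F) != 0 -> A != B -> incident X (join A B) ->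
  hrefl A B X = X -> X = A \/ X = B.
Proof.
move=> h2 hAB hX; case: (hrefl_cases h2 hAB hX) => [[] //|[_ _ /harm_unpack [/and5P [_ _ _ _ /andP [_ hne]] _ _]]].
by move=> e; rewrite e eqxx in hne.
Qed.

Lemma hrefl_eq A B X Y : (2%:R : F) != 0 -> harmonic A B X Y -> hrefl A B X = Y.
Proof.
move=> h2 H; have [/and5P [hAB hAX _ hBX /andP [_ _]] [hX _] _] := harm_unpack H.
apply: (@harm_uniq A B X); last exact: H.
by apply: hrefl_harm; rewrite // eq_sym.
Qed.

Lemma hrefl_invol A B X : (2%:R : F) != 0 -> A != B -> incident X (join A B) ->
  hrefl A B (hrefl A B X) = X.
Proof.
move=> h2 hAB hX; case: (hrefl_cases h2 hAB hX) => [[_ e]|[_ _ H]]; first by rewrite !e.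
by apply: hrefl_eq => //; apply: harm_sym.
Qed.


Definition Proj (n z v : vec3 F) := lc (vdot n z) (- vdot n v) v z.

Lemma Proj_lin n z s l u v :
  Proj n z (vscale s (vadd u (vscale l v))) = vscale s (vadd (Proj n z u) (vscale l (Proj n z v))).
Proof.
case: n => [[? ?] ?]; case: z => [[? ?] ?]; case: u => [[? ?] ?]; case: v => [[? ?] ?].
rewrite /Proj /lc /vdot /vscale /vadd /=; apply: v3E; ring.
Qed.

Lemma lc_solve x y u v : x != 0 -> lc x y u v = vz -> u = vscale (- y / x) v.
Proof.
move=> hx; case: u => [[u1 u2] u3]; case: v => [[v1 v2] v3].
rewrite /lc /vscale /vadd /vz /=; case=> h1 h2 h3; apply: v3E; apply: (mulfI hx).
- have -> : x * (- y / x * v1) = - (y * v1) by field.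
  by apply/eqP; rewrite -addr_eq0 h1.
- have -> : x * (- y / x * v2) = - (y * v2) by field.
  by apply/eqP; rewrite -addr_eq0 h2.
- have -> : x * (- y / x * v3) = - (y * v3) by field.
  by apply/eqP; rewrite -addr_eq0 h3.
Qed.

Lemma cr_transport P1 P2 P3 P4 Q1 Q2 Q3 Q4 (f : vec3 F -> vec3 F) (c1 c2 c3 c4 k : F) :
  (forall s l u v, f (vscale s (vadd u (vscale l v))) = vscale s (vadd (f u) (vscale l (f v)))) ->
  c1 != 0 -> c2 != 0 -> c3 != 0 -> c4 != 0 ->
  val Q1 = vscale c1 (f (val P1)) -> val Q2 = vscale c2 (f (val P2)) ->
  val Q3 = vscale c3 (f (val P3)) -> val Q4 = vscale c4 (f (val P4)) ->
  cross_ratio_is P1 P2 P3 P4 k -> cross_ratio_is Q1 Q2 Q3 Q4 k.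
Proof.
move=> hf h1 h2 h3 h4 e1 e2 e3 e4 [l [m [s [t [/and3P [hs ht hm] [f3 f4 ek]]]]]].
exists (l * c1 / c2), (m * c1 / c2), (c3 * s / c1), (c4 * t / c1); split.
  by rewrite !mulf_eq0 !invr_eq0 !negb_or hs ht hm h1 h2 h3 h4.
split.
- rewrite e3 f3 hf e1 e2; move: (f (val P1)) (f (val P2)) => [[? ?] ?] [[? ?] ?].
  by rewrite /vscale /vadd /=; apply: v3E; field; rewrite ?h1 ?h2 ?hm.
- rewrite e4 f4 hf e1 e2; move: (f (val P1)) (f (val P2)) => [[? ?] ?] [[? ?] ?].
  by rewrite /vscale /vadd /=; apply: v3E; field; rewrite ?h1 ?h2 ?hm.
- by rewrite ek; field; rewrite ?h1 ?h2 ?hm.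
Qed.

Definition okp (n m l : line F) Z P Q :=
  [/\ incident Z l, incident P l, incident P m, incident Q l & incident Q n].

Lemma okp_Q (n m l : line F) Z P Q : ~~ incident Z n -> ~~ incident Z m -> okp n m l Z P Q ->
  Proj (val n) (val Z) (val P) != vz /\ Q = npt (Proj (val n) (val Z) (val P)).
Proof.
move=> hZn hZm [hZl hPl hPm hQl hQn].
have hnz : vdot (val n) (val Z) != 0 by rewrite vdotC.
have hpz : Proj (val n) (val Z) (val P) != vz.
  apply/negP => /eqP /(lc_solve hnz) e; have eP := eq_scaled e; subst P.
  by rewrite hPm in hZm.
split => //.
have hln : l != n by apply: contraNneq hZn => <-.
apply: (pts_uniq hln) => //.
- rewrite /incident val_npt // vdot_scale /Proj vdot_lc; move: hZl hPl => /eqP -> /eqP ->.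
  by rewrite !mulr0 addr0 mulr0.
- rewrite /incident val_npt // vdot_scale /Proj vdot_lc.
  rewrite (vdotC (val P)) (vdotC (val Z)).
  by apply/eqP; rewrite (_ : _ + _ = 0) ?mulr0 //; ring.
Qed.

Lemma okp_dist (n m l1 l2 : line F) Z P1 Q1 P2 Q2 : ~~ incident Z n -> ~~ incident Z m ->
  okp n m l1 Z P1 Q1 -> okp n m l2 Z P2 Q2 -> P1 != P2 -> Q1 != Q2.
Proof.
move=> hZn hZm [hZ1 hP1 hP1m hQ1 hQ1n] [hZ2 hP2 hP2m hQ2 hQ2n] hP.
apply: contraNneq hP => eQ; subst Q2.
have hZQ : Z != Q1 by apply: contraNneq hZn => ->.
have e1 := join_uniq hZQ hZ1 hQ1; have e2 := join_uniq hZQ hZ2 hQ2.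
have hlm : l1 != m by apply: contraNneq hZm => <-.
by apply/eqP; apply: (pts_uniq hlm) => //; rewrite e1 -e2.
Qed.

Lemma persp (n m l1 l2 l3 l4 : line F) Z P1 P2 P3 P4 Q1 Q2 Q3 Q4 :
  ~~ incident Z n -> ~~ incident Z m ->
  okp n m l1 Z P1 Q1 -> okp n m l2 Z P2 Q2 -> okp n m l3 Z P3 Q3 -> okp n m l4 Z P4 Q4 ->
  harmonic P1 P2 P3 P4 -> harmonic Q1 Q2 Q3 Q4.
Proof.
move=> hZn hZm o1 o2 o3 o4 [/and5P [d12 d13 d14 d23 /andP [d24 d34]] _ hcr].
split.
- apply: d4I; [exact: (okp_dist hZn hZm o1 o2 d12) | exact: (okp_dist hZn hZm o1 o3 d13)
    | exact: (okp_dist hZn hZm o1 o4 d14) | exact: (okp_dist hZn hZm o2 o3 d23)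
    | exact: (okp_dist hZn hZm o2 o4 d24) | exact: (okp_dist hZn hZm o3 o4 d34)].
- by exists n; case: o1 => _ _ _ _ ->; case: o2 => _ _ _ _ ->; case: o3 => _ _ _ _ ->;
    case: o4 => _ _ _ _ ->.
have [z1 q1] := okp_Q hZn hZm o1; have [z2 q2] := okp_Q hZn hZm o2.
have [z3 q3] := okp_Q hZn hZm o3; have [z4 q4] := okp_Q hZn hZm o4.
apply: (cr_transport (@Proj_lin (val n) (val Z)) (leadinv_nz z1) (leadinv_nz z2)
  (leadinv_nz z3) (leadinv_nz z4) _ _ _ _ hcr).
- by rewrite q1 val_npt.
- by rewrite q2 val_npt.
- by rewrite q3 val_npt.
- by rewrite q4 val_npt.
Qed.


Lemma main_aux (A C B D : point F) :
  (2%:R : F) != 0 ->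
  quadrangle A C B D ->
  let Zmap := fun X => meet (join C X) (join D (hrefl A B X)) in
  [/\ (forall X, incident X (join A B) -> join C X <> join D (hrefl A B X)),
      (forall X1 X2, incident X1 (join A B) -> incident X2 (join A B) ->
          Zmap X1 = Zmap X2 -> X1 = X2),
      (forall X, incident X (join A B) -> harmonic_curve A C B D (Zmap X))
    & (forall Z, harmonic_curve A C B D Z ->
          exists2 X, incident X (join A B) & Zmap X = Z)].
Proof.
move=> h2 [/and5P [hAC hAB hAD hCB /andP [hCD hBD]] nACB nACD nABD nCBD] Zmap.
have [hA hB] := join_spec hAB.
have nC : ~~ incident C (join A B).
  by apply/negP => hC; apply: nACB; exists (join A B).
have nD : ~~ incident D (join A B).
  by apply/negP => hD; apply: nABD; exists (join A B).
have CX X : incident X (join A B) -> C != X.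
  by move=> hX; apply: contraNneq nC => ->.
have DX X : incident X (join A B) -> D != X.
  by move=> hX; apply: contraNneq nD => ->.
have P1 X : incident X (join A B) -> join C X <> join D (hrefl A B X).
  move=> hX e; have hY := hrefl_on h2 hAB hX.
  have [hC1 hX1] := join_spec (CX _ hX); have [hD1 hY1] := join_spec (DX _ hY).
  rewrite -e in hD1 hY1.
  have [eXY|nXY] := eqVneq X (hrefl A B X).
    case: (hrefl_fix h2 hAB hX (esym eXY)) => eX; rewrite {1}eX in hX1.
      by apply: nACD; exists (join C X); split.
    by apply: nCBD; exists (join C X); split.
  have e1 := join_uniq nXY hX1 hY1; have e2 := join_uniq nXY hX hY.
  by move: nC; rewrite e2 -e1 hC1.
have P1' X : incident X (join A B) -> join C X != join D (hrefl A B X).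
  by move=> hX; apply/eqP; apply: P1.
have ZS X : incident X (join A B) ->
    incident (Zmap X) (join C X) /\ incident (Zmap X) (join D (hrefl A B X)).
  by move=> hX; apply: meet_spec; apply: P1'.
have Zuniq X Z : incident X (join A B) -> incident Z (join C X) ->
    incident Z (join D (hrefl A B X)) -> Zmap X = Z.
  by move=> hX h1 h3; rewrite /Zmap -(meet_uniq (P1' _ hX) h1 h3).
have ZA : Zmap A = A.
  apply: Zuniq => //; first by have [] := join_spec (CX _ hA).
  by rewrite hrefl_AB; [have [] := join_spec (DX _ hA) | left].
have ZB : Zmap B = B.
  apply: Zuniq => //; first by have [] := join_spec (CX _ hB).
  by rewrite hrefl_AB; [have [] := join_spec (DX _ hB) | right].
have lne (l : line F) P : incident P l -> ~~ incident P (join A B) -> join A B != l.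
  by move=> hl hn; apply: contraNneq hn => ->.
split.
- exact: P1.
- move=> X1 X2 hX1 hX2 e.
  have [z1a z1b] := ZS _ hX1; have [z2a z2b] := ZS _ hX2.
  rewrite e in z1a z1b.
  have [eZC|nZC] := eqVneq (Zmap X2) C.
    rewrite eZC in z1b z2b.
    have hY1 := hrefl_on h2 hAB hX1; have hY2 := hrefl_on h2 hAB hX2.
    have [hD1 _] := join_spec (DX _ hY1); have [hD2 _] := join_spec (DX _ hY2).
    have hDC : D != C by rewrite eq_sym.
    have e1 := join_uniq hDC hD1 z1b.
    have e2 := join_uniq hDC hD2 z2b.
    have [_ hy1] := join_spec (DX _ hY1); have [_ hy2] := join_spec (DX _ hY2).
    have [hCj _] := join_spec hDC.
    have eY : hrefl A B X1 = hrefl A B X2.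
      apply: (pts_uniq (lne _ _ hCj nD)) => //.
      - by rewrite e1 in hy1.
      - by rewrite e2 in hy2.
    by rewrite -(hrefl_invol h2 hAB hX1) eY hrefl_invol.
  have [hC1 _] := join_spec (CX _ hX1); have [hC2 _] := join_spec (CX _ hX2).
  have hCZ : C != Zmap X2 by rewrite eq_sym.
  have e1 := join_uniq hCZ hC1 z1a; have e2 := join_uniq hCZ hC2 z2a.
  have [_ hx1] := join_spec (CX _ hX1); have [_ hx2] := join_spec (CX _ hX2).
  have [hCj _] := join_spec hCZ.
  apply: (pts_uniq (lne _ _ hCj nC)) => //.
  - by rewrite e1 in hx1.
  - by rewrite e2 in hx2.
- move=> X hX.
  case: (hrefl_cases h2 hAB hX) => [[[eX|eX] _]|[hXA hXB H]].
  + by left; rewrite eX ZA !inE eqxx.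
  + by left; rewrite eX ZB !inE eqxx ?orbT.
  have [/and5P [_ _ _ _ /andP [_ hXY]] [_ hY] _] := harm_unpack H.
  set Y := hrefl A B X in H hXY hY *.
  have [z1 z2] := ZS _ hX; rewrite -/Y in z2.
  set Z := Zmap X in z1 z2 *.
  case: (boolP (Z \in [:: A; C; B; D])) => hin; first by left.
  right.
  have hin' := hin; rewrite !inE !negb_or in hin'.
  move/and4P: hin' => [nZA nZC nZB nZD].
  have hZn : ~~ incident Z (join A B).
    apply/negP => hZ.
    have [hCj hXj] := join_spec (CX _ hX); have [hDj hYj] := join_spec (DX _ hY).
    have e1 : Z = X by apply: (pts_uniq (lne _ _ hCj nC)).
    have e2 : Z = Y by apply: (pts_uniq (lne _ _ hDj nD)).
    by move: hXY; rewrite -e1 -e2 eqxx.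
  have [hZA hAZ] := join_spec nZA; have [hZB hBZ] := join_spec nZB.
  have [hZC hCZ] := join_spec nZC; have [hZD hDZ] := join_spec nZD.
  have [hCj hXj] := join_spec (CX _ hX); have [hDj hYj] := join_spec (DX _ hY).
  have eC : join C X = join Z C by apply: join_uniq.
  have eD : join D Y = join Z D by apply: join_uniq.
  have mA : A = meet (join A B) (join Z A) by apply: meet_uniq => //; apply: lne hZA hZn.
  have mB : B = meet (join A B) (join Z B) by apply: meet_uniq => //; apply: lne hZB hZn.
  have mX : X = meet (join A B) (join Z C) by apply: meet_uniq => //; [apply: lne hZC hZn|rewrite -eC].
  have mY : Y = meet (join A B) (join Z D) by apply: meet_uniq => //; [apply: lne hZD hZn|rewrite -eD].
  have [/and5P [dAB dAX dAY dBX /andP [dBY dXY]] _ _] := harm_unpack H.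
  have dl (l1 l2 : line F) (Q1 Q2 : point F) : Q1 = meet (join A B) l1 ->
      Q2 = meet (join A B) l2 -> Q1 != Q2 -> l1 != l2.
    by move=> -> ->; apply: contraNneq => ->.
  have d4 : distinct4 (join Z A) (join Z B) (join Z C) (join Z D).
    apply: d4I.
    - exact: (dl _ _ _ _ mA mB dAB).
    - exact: (dl _ _ _ _ mA mX dAX).
    - exact: (dl _ _ _ _ mA mY dAY).
    - exact: (dl _ _ _ _ mB mX dBX).
    - exact: (dl _ _ _ _ mB mY dBY).
    - exact: (dl _ _ _ _ mX mY dXY).
  split => //; split => //; first by rewrite hZA hZB hZC hZD.
  by exists (join A B); split => //; rewrite -mA -mB -mX -mY.
- move=> Z [hin|[hZn hd4 hpen]].
  + move: hin; rewrite !inE => /or4P [] /eqP ->.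
    * by exists A.
    * have hDC : D != C by rewrite eq_sym.
      have [hDj hCj] := join_spec hDC.
      have ne := lne _ _ hDj nD.
      have [hY0 hY0j] := meet_spec ne.
      set Y0 := meet (join A B) (join D C) in hY0 hY0j.
      exists (hrefl A B Y0); first exact: hrefl_on.
      have hX := hrefl_on h2 hAB hY0.
      apply: Zuniq => //; first by have [] := join_spec (CX _ hX).
      rewrite hrefl_invol //.
      by rewrite -(join_uniq (DX _ hY0) hDj hY0j).
    * by exists B.
    * have [hCj hDj] := join_spec hCD.
      have ne := lne _ _ hCj nC.
      have [hX hXj] := meet_spec ne.
      set X := meet (join A B) (join C D) in hX hXj.
      exists X => //.
      apply: Zuniq => //; first by rewrite -(join_uniq (CX _ hX) hCj hXj).
      by have [] := join_spec (DX _ (hrefl_on h2 hAB hX)).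
  + move: hZn; rewrite !inE !negb_or => /and4P [nZA nZC nZB nZD].
    case: hpen => _ _ [m [hZm hH]].
    move: hd4 => /and5P [dAB _ _ _ _].
    have [hZA hAZ] := join_spec nZA; have [hZB hBZ] := join_spec nZB.
    have [hZC hCZ] := join_spec nZC; have [hZD hDZ] := join_spec nZD.
    have hZn : ~~ incident Z (join A B).
      apply/negP => hZ; move: dAB.
      by rewrite -(join_uniq nZA hZ hA) -(join_uniq nZB hZ hB) eqxx.
    have [hX hXj] := meet_spec (lne _ _ hZC hZn).
    have [hX' hX'j] := meet_spec (lne _ _ hZD hZn).
    set X := meet (join A B) (join Z C) in hX hXj.
    set X' := meet (join A B) (join Z D) in hX' hX'j.
    have ok (l : line F) (Q : point F) : incident Z l -> incident Q l -> incident Q (join A B) ->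
        okp (join A B) m l Z (meet m l) Q.
      move=> hZl hQl hQn; have hml : m != l by apply: contraNneq hZm => ->.
      by have [h3 h4] := meet_spec hml; split.
    have Hh : harmonic A B X X'.
      apply: (persp hZn hZm (ok _ _ hZA hAZ hA) (ok _ _ hZB hBZ hB) (ok _ _ hZC hXj hX)
        (ok _ _ hZD hX'j hX') hH).
    have [/and5P [_ hAX _ hBX _] _ _] := harm_unpack Hh.
    have eY := hrefl_eq h2 Hh.
    exists X => //.
    apply: Zuniq => //.
    * by rewrite -(join_uniq (CX _ hX) hCZ hXj).
    * by rewrite eY -(join_uniq (DX _ hX') hDZ hX'j).
Qed.

End S.

Theorem mainTheorem2 (F : fieldType) (A C B D : point F) :
  (2%:R : F) != 0 ->
  quadrangle A C B D ->
  let Zmap := fun X => meet (join C X) (join D (hrefl A B X)) in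
  [/\ (forall X, incident X (join A B) -> join C X <> join D (hrefl A B X)),
      (forall X1 X2, incident X1 (join A B) -> incident X2 (join A B) ->
          Zmap X1 = Zmap X2 -> X1 = X2),
      (forall X, incident X (join A B) -> harmonic_curve A C B D (Zmap X))
    & (forall Z, harmonic_curve A C B D Z ->
          exists2 X, incident X (join A B) & Zmap X = Z)].
Proof. exact: main_aux. Qed.
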